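(* Let $(\Omega,\mathcal F,\mathbb P)$ be a probability space carrying a group of measurable bijections $\{\theta_n\}_{n\in\mathbb Z}$ each preserving $\mathbb P$, and let $\{a_n\}_{n\in\mathbb Z}$ be i.i.d. flow-compatible random variables with values in $\{1,2,\dots\}$, with $\mathbb E[a_0]<\infty$ and $\mathbb P[a_0=1]>0$. Let $f(n)=n+a_n$, let $\Phi^s$ be the set of successful integers and $\Phi^e$ the set of ephemeral integers. Then the intensity of $\Phi^s$ is $$\lambda^s=\mathbb P[0\in\Phi^s]=\frac{1}{\mathbb E[a_0]},$$ and the intensity of $\Phi^e$ is $\lambda^e=\mathbb P[0\in\Phi^e]=1-\frac{1}{\mathbb E[a_0]}$.
   Context: For $n\in\mathbb Z$, the set of descendants of $n$ is $D(n)=\{m\in\mathbb Z:\exists\, j\ge 0,\ f^j(m)=n\}$, where $f^j$ is the $j$-th iterate of $f$. An integer $n$ is successful if $D(n)$ is infinite and ephemeral if $D(n)$ is finite; $\Phi^s$ and $\Phi^e$ are the corresponding random subsets of $\mathbb Z$ (they are stationary point processes, being flow-compatible). *)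

(* Defs.v *)
From HB Require Import structures.
From mathcomp Require Import all_boot all_order all_algebra.
From mathcomp Require Import all_classical all_reals all_analysis.
Set Implicit Arguments. Unset Strict Implicit. Unset Printing Implicit Defensive.
Import Order.TTheory GRing.Theory Num.Theory.
Local Open Scope classical_set_scope.
Local Open Scope ring_scope.

Definition fmap (T : Type) (a : int -> T -> nat) (w : T) (n : int) : int :=
  n + (a n w)%:Z.

Definition descendants (T : Type) (a : int -> T -> nat) (w : T) (n : int)
  : set int :=
  [set m | exists j : nat, iter j (fmap a w) m = n].

Definition successful (T : Type) (a : int -> T -> nat) (n : int) : set T :=
  [set w | ~ finite_set (descendants a w n)].

Definition ephemeral (T : Type) (a : int -> T -> nat) (n : int) : set T :=
  [set w | finite_set (descendants a w n)].

Definition measure_preserving_flow (d : measure_display) (T : measurableType d)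
  (R : realType) (P : probability T R) (theta : int -> T -> T) : Prop :=
  [/\ theta 0 = id,
      (forall m n, theta (m + n) = theta m \o theta n),
      (forall n, measurable_fun setT (theta n)) &
      (forall n (A : set T), measurable A -> P (theta n @^-1` A) = P A)].

Definition flow_compatible (T : Type) (theta : int -> T -> T)
  (a : int -> T -> nat) : Prop :=
  forall n w, a n w = a 0 (theta n w).

(* i.i.d. for nat-valued (discrete) random variables indexed by Z:
   measurable level sets, identical distributions, and mutual independence
   (product rule over every finite family of distinct indices). *)
Definition iid_nat (d : measure_display) (T : measurableType d)
  (R : realType) (P : probability T R) (a : int -> T -> nat) : Prop :=
  [/\ (forall n k, measurable [set w | a n w = k]),
      (forall n k, P [set w | a n w = k] = P [set w | a 0 w = k]) &
      (forall (I : seq int) (k : int -> nat), uniq I ->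
         P (\bigcap_(i in [set` I]) [set w | a i w = k i]) =
         (\prod_(i <- I) P [set w | a i w = k i])%E)].

(* Main.v *)
Require Import Defs.
From HB Require Import structures.
From mathcomp Require Import all_boot all_order all_algebra.
From mathcomp Require Import all_classical all_reals all_analysis.
From mathcomp Require Import zify.
Set Implicit Arguments. Unset Strict Implicit. Unset Printing Implicit Defensive.
Import Order.TTheory GRing.Theory Num.Theory.
Local Open Scope classical_set_scope.
Local Open Scope ring_scope.

Section Det.
Variables (T : Type) (a : int -> T -> nat) (w : T).
Hypothesis ha : forall n, (1 <= a n w)%N.
Local Notation F := (Defs.fmap a w).

Lemma F_gt n : n < F n.
Proof. have := ha n; rewrite /Defs.fmap; lia. Qed.

Lemma iter_ge j x : x + j%:Z <= iter j F x.
Proof.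
elim: j => [|j IH] /=; first lia.
have := F_gt (iter j F x); lia.
Qed.

Lemma iter_eq0 j x : iter j F x = x -> j = 0%N.
Proof. have := iter_ge j x; lia. Qed.

Lemma fin_bounded (A : set int) : finite_set A -> exists L, forall x, A x -> L <= x.
Proof.
move/finite_seqP => [s ->]; exists (foldr Order.min 0 s) => x /=.
elim: s => [//|y s IH]; rewrite inE => /orP[/eqP ->|/IH h] /=.
  by rewrite ge_min lexx.
by rewrite ge_min h orbT.
Qed.

Lemma bounded_fin (A : set int) L U : (forall x, A x -> L <= x <= U) -> finite_set A.
Proof.
move=> h; apply: (@sub_finite_set _ _ [set` map (fun i : nat => L + i%:Z) (iota 0 (absz (U - L + 1)%R))]).
  move=> x /h /andP[h1 h2] /=; apply/mapP; exists (absz (x - L)%R).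
    rewrite mem_iota /=; lia.
  lia.
by apply/finite_seqP; eexists.
Qed.

Lemma desc_le n x : descendants a w n x -> x <= n.
Proof. by move=> [j <-]; have := iter_ge j x; lia. Qed.

Lemma fin_desc n : finite_set (descendants a w n) <->
  exists L, forall x, descendants a w n x -> L <= x.
Proof.
split; first exact: fin_bounded.
move=> [L hL]; apply: (@bounded_fin _ L n) => x hx.
by rewrite hL //= desc_le.
Qed.

Lemma succ_iff n : (~ finite_set (descendants a w n)) <->
  forall N : nat, exists k : nat, descendants a w n (- N%:Z - 1 - k%:Z).
Proof.
rewrite fin_desc; split.
  move=> h N; apply: contrapT => hN; apply: h; exists (- N%:Z).
  move=> x hx; apply: contrapT => hlt; apply: hN; exists (absz (- N%:Z - 1 - x)%R).
  by have -> : (- N%:Z - 1 - (absz (- N%:Z - 1 - x)%R)%:Z) = x by lia.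
move=> h [L hL]; have [k hk] := h (absz (L)%R).
by have := hL _ hk; lia.
Qed.

Lemma desc_F n x : descendants a w n x -> descendants a w (F n) x.
Proof. by move=> [j hj]; exists j.+1; rewrite iterS hj. Qed.

Lemma succ_F n : ~ finite_set (descendants a w n) -> ~ finite_set (descendants a w (F n)).
Proof.
move=> h hf; apply: h; apply: sub_finite_set hf => x; exact: desc_F.
Qed.

Lemma desc_trans n m x : descendants a w n m -> descendants a w m x ->
  descendants a w n x.
Proof. by move=> [j hj] [k hk]; exists (j + k)%N; rewrite iterD hk. Qed.

Lemma desc_refl n : descendants a w n n.
Proof. by exists 0%N. Qed.

Lemma desc_child y x : descendants a w y x -> x <> y ->
  exists c, F c = y /\ descendants a w c x.
Proof.
move=> [[|j] hj] hne; first by [].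
by exists (iter j F x); split; [rewrite -iterS|exists j].
Qed.

(* finitely many children + successful -> a successful child *)
Lemma succ_child y N : (forall m : nat, (N <= m)%N -> a (y - m.+1%:Z) w <> m.+1) ->
  ~ finite_set (descendants a w y) ->
  exists m : nat, F (y - m.+1%:Z) = y /\ ~ finite_set (descendants a w (y - m.+1%:Z)).
Proof.
move=> hN hs; apply: contrapT => hno; apply: hs.
have : finite_set ([set y] `|` \bigcup_(m in [set m : nat | (m < N)%N /\ F (y - m.+1%:Z) = y])
   descendants a w (y - m.+1%:Z)).
  rewrite finite_setU; split; first exact: finite_set1.
  apply: bigcup_finite.
    by apply: (@sub_finite_set _ _ `I_N) => [m []//|]; exact: finite_II.
  move=> m [_ hm] /=; apply: contrapT => hinf; apply: hno; by exists m.
apply: sub_finite_set => x hx.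
have [->|hne] := eqVneq x y; first by left.
right; have [c [hc hcx]] := desc_child hx (fun e => (negP hne) (introT eqP e)).
have hcy : c < y by rewrite -hc; exact: F_gt.
exists (absz (y - c - 1)%R); last by have -> : y - ((absz (y - c - 1)%R)).+1%:Z = c by lia.
split => /=; last by have -> : y - ((absz (y - c - 1)%R)).+1%:Z = c by lia.
apply: contrapT => hle; have hle2 : (N <= absz (y - c - 1)%R)%N by lia. apply: (hN _ hle2).
have -> : y - ((absz (y - c - 1)%R)).+1%:Z = c by lia.
move: hc; rewrite /Defs.fmap; lia.
Qed.

Lemma cross z m : m <= z -> exists j, iter j F m <= z < F (iter j F m).
Proof.
move=> hm; have [k hk] : exists k : nat, z - m = k%:Z by exists (absz (z - m)%R); lia.
elim: k {-2}k (leqnn k) m hm hk => [|K IH] k hkK m hm hk.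
  exists 0%N => /=; have := F_gt m; lia.
have [hz|hz] := ltP z (F m); first by exists 0%N => /=; lia.
have := F_gt m => hFm.
have [j hj] := IH (absz (z - F m)%R) ltac:(lia) (F m) hz ltac:(lia).
by exists j.+1; rewrite iterSr.
Qed.

Lemma succ_iter j n : ~ finite_set (descendants a w n) ->
  ~ finite_set (descendants a w (iter j F n)).
Proof. by elim: j => [//|j IH] h /=; apply: succ_F; exact: IH. Qed.

Lemma succ_cross z n0 : n0 <= z -> ~ finite_set (descendants a w n0) ->
  exists n, [/\ n <= z, z < F n & ~ finite_set (descendants a w n)].
Proof.
move=> hn hs; have [j hj] := cross hn.
by exists (iter j F n0); split; [lia|lia|exact: succ_iter].
Qed.

Lemma exists_succ z N : (forall k : nat, (N <= k)%N -> (a (z - k%:Z) w <= k)%N) ->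
  exists n, n <= z /\ ~ finite_set (descendants a w n).
Proof.
move=> hN; apply: contrapT => hno.
have hfin : finite_set (\bigcup_(k in `I_N) descendants a w (z - k%:Z)).
  apply: bigcup_finite; first exact: finite_II.
  move=> k _; apply: contrapT => hk; apply: hno; exists (z - k%:Z); split => //; lia.
have [L hL] := fin_bounded hfin.
have hm1 : Order.min L z <= z by rewrite ge_min lexx orbT.
have hm2 : Order.min L z <= L by rewrite ge_min lexx.
have hx : Order.min L z - 1 <= z by lia.
have [j hj] := cross hx.
pose n := iter j F (Order.min L z - 1).
have hk : (absz (z - n)%R < N)%N.
  rewrite ltnNge; apply/negP => hle; have := hN _ hle.
  have -> : z - (absz (z - n)%R)%:Z = n by rewrite /n; lia.
  rewrite /n; move: hj; rewrite /Defs.fmap; lia.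
have : (\bigcup_(k in `I_N) descendants a w (z - k%:Z)) (Order.min L z - 1).
  exists (absz (z - n)%R) => //=.
  have -> : z - (absz (z - n)%R)%:Z = n by rewrite /n; lia.
  by exists j.
move/hL; lia.
Qed.

Lemma ones_chain z (n : nat) : (forall i : nat, (i < n)%N -> a (z + i%:Z) w = 1%N) ->
  iter n F z = z + n%:Z.
Proof.
elim: n => [|n IH] h /=; first lia.
rewrite IH; last by move=> i hi; apply: h; lia.
by rewrite /Defs.fmap h //; lia.
Qed.

End Det.

Section Shift.
Variables (T : Type) (theta : int -> T -> T) (a : int -> T -> nat).
Hypothesis hgrp : forall m n, theta (m + n) = theta m \o theta n.
Hypothesis hcomp : flow_compatible theta a.
Hypothesis ha : forall n w, (1 <= a n w)%N.

Lemma a_shift k n w : a n (theta k w) = a (n + k) w.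
Proof. by rewrite hcomp [in RHS]hcomp hgrp. Qed.

Lemma F_shift k w n : Defs.fmap a (theta k w) n = Defs.fmap a w (n + k) - k.
Proof. rewrite /Defs.fmap a_shift; lia. Qed.

Lemma iter_shift k w j x :
  iter j (Defs.fmap a (theta k w)) x = iter j (Defs.fmap a w) (x + k) - k.
Proof.
elim: j => [|j IH] /=; first lia.
by rewrite IH F_shift; congr (Defs.fmap _ _ _ - _); lia.
Qed.

Lemma desc_shift k w y x :
  descendants a (theta k w) y x <-> descendants a w (y + k) (x + k).
Proof.
split => -[j hj]; exists j.
  by move: hj; rewrite iter_shift => <-; lia.
by rewrite iter_shift hj; lia.
Qed.

Lemma succ_shift k w y :
  (~ finite_set (descendants a (theta k w) y)) <->
  (~ finite_set (descendants a w (y + k))).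
Proof.
rewrite (fin_desc (fun n => ha n (theta k w))) (fin_desc (fun n => ha n w)).
split => h [L hL]; apply: h.
  exists (L - k) => x /desc_shift hx; have := hL _ hx; lia.
exists (L + k) => x hx.
have : descendants a (theta k w) y (x - k).
  by apply/desc_shift; have -> : x - k + k = x by lia.
move/hL; lia.
Qed.

End Shift.

Section Cyl.
Context (d : measure_display) (T : measurableType d) (R : realType)
  (P : probability T R) (a : int -> T -> nat).
Hypothesis hiid : iid_nat P a.

Definition cyl (I : seq int) (k : int -> nat) : set T :=
  \bigcap_(i in [set` I]) [set w | a i w = k i].

Definition CylS (Ip : pred int) : set (set T) :=
  [set A | A = set0 \/ exists I k, all Ip I /\ A = cyl I k].

Lemma lvl_meas n k : measurable [set w | a n w = k].
Proof. by case: hiid. Qed.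

Lemma cyl_meas I k : measurable (cyl I k).
Proof.
rewrite /cyl bigcap_seq; elim: I => [|i I IH]; first by rewrite big_nil.
by rewrite big_cons; apply: measurableI => //; exact: lvl_meas.
Qed.

Lemma CylS_meas Ip : CylS Ip `<=` measurable.
Proof. by move=> A [->|[I [k [_ ->]]]]; [exact: measurable0|exact: cyl_meas]. Qed.

Lemma cyl_undup I k : cyl (undup I) k = cyl I k.
Proof.
rewrite /cyl; congr (\bigcap_(i in _) _); apply/seteqP; split => x /=;
  by rewrite mem_undup.
Qed.

Lemma P_cyl I k : P (cyl I k) = (\prod_(i <- undup I) P [set w | a i w = k i])%E.
Proof. by case: hiid => _ _ h; rewrite -cyl_undup h // undup_uniq. Qed.

Lemma cylI I J k l :
  (forall i, i \in I -> i \in J -> k i = l i) ->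
  cyl I k `&` cyl J l = cyl (I ++ J) (fun i => if i \in I then k i else l i).
Proof.
move=> hkl; apply/seteqP; split => w.
  move=> [h1 h2] i /=; rewrite mem_cat => /orP[hi|hi].
    by rewrite hi; exact: h1.
  case: ifP => hiI; last exact: h2.
  by rewrite hkl //; exact: h2.
move=> h; split => i /= hi.
  by have := h i ltac:(by rewrite /= mem_cat hi); rewrite /= hi.
have := h i ltac:(by rewrite /= mem_cat hi orbT).
by rewrite /=; case: ifP => // hiI; rewrite hkl.
Qed.

Lemma cylI0 I J k l i : i \in I -> i \in J -> k i <> l i ->
  cyl I k `&` cyl J l = set0.
Proof.
move=> hI hJ hne; apply/seteqP; split => // w [h1 h2]; apply: hne.
by rewrite -(h1 i hI) -(h2 i hJ).
Qed.

Lemma CylS_setI Ip : setI_closed (CylS Ip).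
Proof.
move=> A B [->|[I [k [hI ->]]]]; first by rewrite set0I; left.
move=> [->|[J [l [hJ ->]]]]; first by rewrite setI0; left.
have [[i [hiI hiJ hne]]|hno] := pselect (exists i, [/\ i \in I, i \in J & k i <> l i]).
  by left; exact: cylI0 hne.
right; rewrite cylI; last first.
  by move=> i hi hj; apply: contrapT => hne; apply: hno; exists i.
by exists (I ++ J), (fun i => if i \in I then k i else l i); split; [rewrite all_cat hI hJ|].
Qed.

Lemma CylST Ip : CylS Ip setT.
Proof.
right; exists [::], (fun _ => 0%N); split => //.
by apply/seteqP; split => // w _ i.
Qed.

Lemma P_fin (A : set T) : measurable A -> P A \is a fin_num.
Proof.
move=> mA; rewrite ge0_fin_numE //; apply: (le_lt_trans (probability_le1 P mA)).
by rewrite ltry.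
Qed.

Lemma indep_cyl (Ip Jp : pred int) : (forall i, Ip i -> Jp i -> False) ->
  forall A B, CylS Ip A -> CylS Jp B -> P (A `&` B) = (P A * P B)%E.
Proof.
move=> hdis A B [->|[I [k [hI ->]]]]; first by rewrite set0I measure0 mul0e.
move=> [->|[J [l [hJ ->]]]]; first by rewrite setI0 measure0 mule0.
have hIJ i : i \in I -> i \in J -> False.
  by move=> h1 h2; apply: (hdis i); [exact: (allP hI)|exact: (allP hJ)].
rewrite cylI; last by move=> i h1 h2; case: (hIJ i h1 h2).
rewrite !P_cyl.
have hperm : perm_eq (undup (I ++ J)) (undup I ++ undup J).
  apply: uniq_perm; first exact: undup_uniq.
    rewrite cat_uniq !undup_uniq /= andbT; apply/hasPn => i.
    rewrite !mem_undup => hj; apply/negP => hi; exact: hIJ i hi hj.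
  by move=> i; rewrite mem_cat !mem_undup mem_cat.
rewrite (perm_big _ hperm) big_cat /=; congr (_ * _)%E.
  by apply: eq_big_seq => i; rewrite mem_undup => ->.
apply: eq_big_seq => i; rewrite mem_undup => hi.
by case: ifP => // hiI; case: (hIJ i hiI hi).
Qed.

Lemma indep1 (Ip Jp : pred int) : (forall i, Ip i -> Jp i -> False) ->
  forall A B, <<s CylS Ip >> A -> CylS Jp B -> P (A `&` B) = (P A * P B)%E.
Proof.
move=> hdis A B hA hB.
have mB : measurable B := CylS_meas hB.
have hB0 : (0 <= fine (P B))%R by apply: fine_ge0.
pose m1 := mrestr P mB.
pose m2 := mscale (NngNum hB0) P.
have e2 X : m2 X = (P B * P X)%E by rewrite /m2 /mscale /= fineK // P_fin.
have hm : m1 A = m2 A.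
  apply: (@g_sigma_algebra_measure_unique _ R T (CylS Ip) (@CylS_meas Ip)
    (fun _ => setT) (fun _ => CylST Ip) _ m1 m2 (@CylS_setI Ip)) => //.
  - by rewrite bigcup_const.
  - move=> X hX; change (P (X `&` B) = ((fine (P B))%:E * P X)%E); rewrite fineK ?P_fin // muleC; exact: indep_cyl hX hB.
  - by move=> _; change (P (setT `&` B) < +oo)%E; rewrite setTI; apply: (le_lt_trans (probability_le1 P mB)); rewrite ltry.
by move: hm; change (P (A `&` B) = ((fine (P B))%:E * P A)%E -> P (A `&` B) = (P A * P B)%E); rewrite fineK ?P_fin // muleC.
Qed.

Lemma sig_meas Ip : <<s CylS Ip >> `<=` measurable.
Proof.
exact: (smallest_sub (@sigma_algebra_measurable _ T) (@CylS_meas Ip)).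
Qed.

Lemma indep2 (Ip Jp : pred int) : (forall i, Ip i -> Jp i -> False) ->
  forall A B, <<s CylS Ip >> A -> <<s CylS Jp >> B -> P (A `&` B) = (P A * P B)%E.
Proof.
move=> hdis A B hA hB.
have mA : measurable A := sig_meas hA.
have hA0 : (0 <= fine (P A))%R by apply: fine_ge0.
pose m1 := mrestr P mA.
pose m2 := mscale (NngNum hA0) P.
have e2 X : m2 X = (P A * P X)%E by rewrite /m2 /mscale /= fineK // P_fin.
have hm : m1 B = m2 B.
  apply: (@g_sigma_algebra_measure_unique _ R T (CylS Jp) (@CylS_meas Jp)
    (fun _ => setT) (fun _ => CylST Jp) _ m1 m2 (@CylS_setI Jp)) => //.
  - by rewrite bigcup_const.
  - move=> X hX; change (P (X `&` A) = ((fine (P A))%:E * P X)%E); rewrite fineK ?P_fin // setIC; exact: (indep1 hdis).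
  - by move=> _; change (P (setT `&` A) < +oo)%E; rewrite setTI; apply: (le_lt_trans (probability_le1 P mA)); rewrite ltry.
by move: hm; change (P (B `&` A) = ((fine (P A))%:E * P B)%E -> P (A `&` B) = (P A * P B)%E); rewrite fineK ?P_fin // setIC.
Qed.

End Cyl.

Section Sig.
Context (d : measure_display) (T : measurableType d) (a : int -> T -> nat).
Hypothesis ha : forall n w, (1 <= a n w)%N.

Definition Lt (z : int) : pred int := fun i => i < z.
Definition Ge (z : int) : pred int := fun i => z <= i.

Lemma lvl_sig (Ip : pred int) n k : Ip n -> <<s CylS a Ip >> [set w | a n w = k].
Proof.
move=> hn; apply: sub_sigma_algebra; right; exists [:: n], (fun _ => k).
split; first by rewrite /= hn.
apply/seteqP; split => w /=.
  by move=> h i /=; rewrite mem_seq1 => /eqP ->.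
by move=> /(_ n); apply; rewrite /= mem_seq1.
Qed.

Lemma iter_sig z j : forall x y, y <= z ->
  <<s CylS a (Lt z) >> [set w | iter j (Defs.fmap a w) x = y].
Proof.
pose GT := g_sigma_algebraType (CylS a (Lt z)).
elim: j => [|j IH] x y hy /=.
  have [->|hne] := eqVneq x y.
    by rewrite (_ : [set _ | _] = setT); [exact: (@measurableT _ GT)|apply/seteqP; split].
  by rewrite (_ : [set _ | _] = set0); [exact: (@measurable0 _ GT)|apply/seteqP; split => // w /= /eqP; rewrite (negbTE hne)].
have [hxy|hxy] := ltP x y; last first.
  rewrite (_ : [set _ | _] = set0); first exact: (@measurable0 _ GT).
  apply/seteqP; split => // w /= h.
  have := iter_ge (fun n => ha n w) j.+1 x; rewrite /= h; lia.
rewrite (_ : [set _ | _] = \bigcup_(k : nat) ([set w | a x w = k] `&`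
    [set w | iter j (Defs.fmap a w) (x + k%:Z) = y])).
  apply: (@bigcupT_measurable _ GT) => k; apply: (@measurableI _ GT).
    by apply: lvl_sig; rewrite /Lt; lia.
  exact: IH.
apply/seteqP; split => w /=.
  by rewrite -iterS iterSr => h; exists (a x w).
by move=> [k _ [hk h]]; rewrite -iterS iterSr /Defs.fmap hk.
Qed.

Lemma desc_sig z y x : y <= z ->
  <<s CylS a (Lt z) >> [set w | descendants a w y x].
Proof.
move=> hy; pose GT := g_sigma_algebraType (CylS a (Lt z)).
rewrite (_ : [set _ | _] = \bigcup_(j : nat) [set w | iter j (Defs.fmap a w) x = y]).
  by apply: (@bigcupT_measurable _ GT) => j; exact: iter_sig.
by apply/seteqP; split => w /= [j]; [exists j|exists j].
Qed.

Lemma succ_sig z y : y <= z ->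
  <<s CylS a (Lt z) >> [set w | ~ finite_set (descendants a w y)].
Proof.
move=> hy; pose GT := g_sigma_algebraType (CylS a (Lt z)).
rewrite (_ : [set _ | _] = \bigcap_(N : nat) \bigcup_(k : nat)
    [set w | descendants a w y (- N%:Z - 1 - k%:Z)]).
  apply: (@bigcapT_measurable _ GT) => N; apply: (@bigcupT_measurable _ GT) => k.
  exact: desc_sig.
apply/seteqP; split => w /=.
  by move/(succ_iff (fun n => ha n w)) => h N _; have [k hk] := h N; exists k.
by move=> h; apply/(succ_iff (fun n => ha n w)) => N; have [k _ hk] := h N I; exists k.
Qed.

Lemma gt_sig (z : int) (k : nat) : <<s CylS a (Ge z) >> [set w | (k < a z w)%N].
Proof.
pose GT := g_sigma_algebraType (CylS a (Ge z)).
rewrite (_ : [set _ | _] = \bigcup_(i : nat) [set w | a z w = (k + i).+1]).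
  by apply: (@bigcupT_measurable _ GT) => i; apply: lvl_sig; rewrite /Ge.
apply/seteqP; split => w /=.
  by move=> h; exists (a z w - k.+1)%N => //=; lia.
by move=> [i _ ->]; lia.
Qed.

End Sig.

Section Gen.
Context (d : measure_display) (T : measurableType d) (R : realType)
  (P : probability T R).
Local Open Scope ereal_scope.

Lemma sum_decomp (A : nat -> set T) : (forall k, measurable (A k)) ->
  \sum_(k <oo) P (A k) = P (\bigcup_k A k) +
    \sum_(k <oo) P (A k `&` \big[setU/set0]_(j < k) A j).
Proof.
move=> mA.
have mU k : measurable (\big[setU/set0]_(j < k) A j).
  by apply: bigsetU_measurable => j _.
transitivity (\sum_(k <oo) (P (seqDU A k) + P (A k `&` \big[setU/set0]_(j < k) A j))).
  by apply: eq_eseriesr => k _; rewrite /seqDU -measureDI.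
rewrite nneseriesD //; congr (_ + _).
rewrite seqDU_bigcup_eq measure_semi_bigcup //.
all: try exact: trivIset_seqDU.
all: try (by move=> k; exact: measurableD).
by apply: bigcupT_measurable => k; exact: measurableD.
Qed.

Lemma null_bigcup (A : nat -> set T) : (forall k, measurable (A k)) ->
  (forall k, P (A k) = 0) -> P (\bigcup_k A k) = 0.
Proof.
move=> mA h; apply/eqP; rewrite eq_le measure_ge0 andbT.
rewrite (le_trans (le_mu_bigcup _ _ _)) //.
  exact: bigcupT_measurable.
by rewrite eseries0 // => i _ _; exact: h.
Qed.

Lemma sum_ae_disj (A : nat -> set T) : (forall k, measurable (A k)) ->
  (forall j k, (j < k)%N -> P (A k `&` A j) = 0) ->
  \sum_(k <oo) P (A k) = P (\bigcup_k A k).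
Proof.
move=> mA h; rewrite sum_decomp // eseries0 ?adde0 // => k _ _.
apply/eqP; rewrite eq_le measure_ge0 andbT big_distrr /=.
have hB := @Boole_inequality _ _ _ P (fun j => A k `&` A j) k (fun j _ => measurableI _ _ (mA k) (mA j)).
apply: (le_trans hB).
by rewrite big1 // => j hj; exact: h.
Qed.

End Gen.

Section Main.
Context (d : measure_display) (T : measurableType d) (R : realType)
  (P : probability T R) (theta : int -> T -> T) (a : int -> T -> nat).
Hypothesis hflow : measure_preserving_flow P theta.
Hypothesis hcomp : flow_compatible theta a.
Hypothesis hiid : iid_nat P a.
Hypothesis ha : forall n w, (1 <= a n w)%N.

Local Notation S y := [set w | ~ finite_set (descendants a w y)].

Lemma hgrp : forall m n, theta (m + n) = theta m \o theta n.
Proof. by have [_ h _ _] := hflow. Qed.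

Lemma S_meas y : measurable (S y).
Proof. exact: (sig_meas hiid (succ_sig ha (lexx y))). Qed.

Lemma lvl_m n k : measurable [set w | a n w = k].
Proof. exact: (lvl_meas hiid). Qed.

Lemma P_shift k (A : set T) : measurable A -> P (theta k @^-1` A) = P A.
Proof. by have [_ _ _ h] := hflow; exact: h. Qed.

Lemma preim_S k y : theta k @^-1` S y = S (y + k).
Proof.
apply/seteqP; split => w /=; move/(succ_shift hgrp hcomp ha); done.
Qed.

Lemma preim_a k y (v : nat) : theta k @^-1` [set w | a y w = v] = [set w | a (y + k) w = v].
Proof. by apply/seteqP; split => w /=; rewrite (a_shift hgrp hcomp). Qed.

Local Open Scope ereal_scope.

Lemma lt_meas n (k : nat) : measurable [set w | (k < a n w)%N].
Proof. exact: (sig_meas hiid (@gt_sig _ T a n k)). Qed.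

Lemma P_le1 (A : set T) : measurable A -> P A \is a fin_num.
Proof. exact: (P_fin P). Qed.

Lemma term_le_series (f : nat -> \bar R) m : (forall i, 0 <= f i) ->
  f m <= \sum_(i <oo) f i.
Proof.
move=> f0; apply: le_trans (nneseries_lim_ge (m := 0%N) m.+1 _) => //.
rewrite big_nat_recr //=; exact: leeDr (sume_ge0 _ _).
Qed.

Lemma two_children0 (j m : nat) : (j < m)%N ->
  P ((S (- m.+1%:Z) `&` [set w | a (- m.+1%:Z) w = m.+1]) `&`
     (S (- j.+1%:Z) `&` [set w | a (- j.+1%:Z) w = j.+1])) = 0.
Proof.
move=> hjm.
pose C m := S (- m.+1%:Z) `&` [set w | a (- m.+1%:Z) w = m.+1].
have mC k : measurable (C k) by apply: measurableI; [exact: S_meas|exact: lvl_m].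
have hC k : P (C k) = P (S 0 `&` [set w | a 0 w = k.+1]).
  rewrite -[RHS](P_shift (- k.+1%:Z)); last by apply: measurableI; [exact: S_meas|exact: lvl_m].
  by rewrite preimage_setI preim_S preim_a !add0r.
have hsum : \sum_(k <oo) P (C k) = P (S 0).
  transitivity (\sum_(k <oo) P (S 0 `&` [set w | a 0 w = k.+1])).
    by apply: eq_eseriesr => k _; exact: hC.
  rewrite -measure_semi_bigcup.
  - congr (P _); apply/seteqP; split => w /=; first by move=> [k _ []].
    by move=> h; exists (a 0 w).-1 => //; split => //; have := ha 0 w; rewrite /=; lia.
  - by move=> k; apply: measurableI; [exact: S_meas|exact: lvl_m].
  - apply/trivIsetP => i k _ _ hik; apply/seteqP; split => // w [[_ h1] [_ h2]].
    by move: hik; rewrite (_ : i = k) ?eqxx //; apply: succn_inj; rewrite -h1 -h2.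
  - by apply: bigcupT_measurable => k; apply: measurableI; [exact: S_meas|exact: lvl_m].
pose K m := [set w | a (- m.+1%:Z) w = m.+1].
have hK : P (lim_sup_set K) = 0.
  apply: lim_sup_set_cvg0; first by move=> k; exact: lvl_m.
  have hKk k : P (K k) = P [set w | a 0 w = k.+1].
    by rewrite -[RHS](P_shift (- k.+1%:Z)) ?preim_a ?add0r //; exact: lvl_m.
  rewrite (eq_eseriesr (g := fun k => P [set w | a 0 w = k.+1])); last by move=> k _; exact: hKk.
  rewrite -measure_semi_bigcup.
  - apply: (le_lt_trans (probability_le1 P _)); last by rewrite ltry.
    by apply: bigcupT_measurable => k; exact: lvl_m.
  - by move=> k; exact: lvl_m.
  - apply/trivIsetP => i k _ _ hik; apply/seteqP; split => // w [h1 h2].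
    by move: hik; rewrite (_ : i = k) ?eqxx //; apply: succn_inj; rewrite -h1 -h2.
  - by apply: bigcupT_measurable => k; exact: lvl_m.
have hsub : S 0 `<=` \bigcup_k C k `|` lim_sup_set K.
  move=> w hw; have [hl|hl] := pselect (lim_sup_set K w); first by right.
  left; have [N hN] : exists N, forall k, (N <= k)%N -> a (0 - k.+1%:Z) w <> k.+1.
    apply: contrapT => hno; apply: hl => N _.
    have [k hk] : exists k, ~ ((N <= k)%N -> a (0 - k.+1%:Z) w <> k.+1).
      by apply: contrapT => h; apply: hno; exists N => k; apply: contrapT => h2; apply: h; exists k.
    exists k => /=; first by apply: contrapT => h; apply: hk => /h.
    by apply: contrapT => h; apply: hk => _; rewrite sub0r; exact: h.
  have [k [hk1 hk2]] := succ_child (fun n => ha n w) hN hw.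
  rewrite sub0r in hk1 hk2.
  exists k => //; split; first exact: hk2.
  by change (a (- k.+1%:Z) w = k.+1); move: hk1; rewrite /Defs.fmap => /eqP; rewrite addrC subr_eq0 => /eqP [->].
have mUC : measurable (\bigcup_k C k) by exact: bigcupT_measurable.
have mLK : measurable (lim_sup_set K).
  apply: bigcapT_measurable => n; apply: bigcup_measurable => k _; exact: lvl_m.
have hle : P (S 0) <= P (\bigcup_k C k).
  apply: (le_trans (le_measure _ _ _ hsub)); rewrite ?inE //; first exact: S_meas.
    exact: measurableU.
  apply: (le_trans (measureU2 _ _ _)) => //; rewrite [X in _ + X](_ : _ = 0) ?adde0 //; exact: hK.
have := sum_decomp P mC; rewrite hsum => hdec.
have hY : \sum_(k <oo) P (C k `&` \big[setU/set0]_(i < k) C i) <= 0.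
  rewrite -(@leeD2lE _ (P (\bigcup_k C k))); last exact: P_le1.
  by rewrite adde0 -hdec.
apply/eqP; rewrite eq_le measure_ge0 andbT.
apply: le_trans hY; apply: le_trans (term_le_series m _); last first.
  by move=> i; apply: measure_ge0; apply: measurableI => //; apply: bigsetU_measurable => k _.
apply: le_measure; rewrite ?inE.
- by apply: measurableI; apply: measurableI => //; [exact: S_meas|exact: lvl_m|exact: S_meas|exact: lvl_m].
- by apply: measurableI => //; apply: bigsetU_measurable => i _.
- apply: setIS; rewrite -bigcup_mkord => w hw; exists j => //.
Qed.

Lemma two_children y (j m : nat) : (j < m)%N ->
  P ((S (y - m.+1%:Z)%R `&` [set w | a (y - m.+1%:Z)%R w = m.+1]) `&`
     (S (y - j.+1%:Z)%R `&` [set w | a (y - j.+1%:Z)%R w = j.+1])) = 0.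
Proof.
move=> hjm; have := two_children0 hjm; rewrite -(P_shift y).
  by rewrite !preimage_setI !preim_S !preim_a ![(- _ + y)%R]addrC.
by apply: measurableI; apply: measurableI; (exact: S_meas || exact: lvl_m).
Qed.

Lemma prod_gt0 (s : seq int) (f : int -> \bar R) : (forall i, 0 < f i) ->
  0 < \prod_(i <- s) f i.
Proof.
move=> hf; elim: s => [|x s IH]; first by rewrite big_nil lte01.
by rewrite big_cons mule_gt0.
Qed.

Hypothesis hp1 : 0 < P [set w | a 0 w = 1%N].

Lemma jump0 b z v : (b < z)%R -> (z < v)%R ->
  P (S b `&` S z `&` [set w | a b w = absz (v - b)%R]) = 0.
Proof.
move=> hbz hzv.
pose E := S b `&` S z `&` [set w | a b w = absz (v - b)%R].
pose GT := g_sigma_algebraType (CylS a (Lt z)).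
have hE : <<s CylS a (Lt z) >> E.
  apply: (@measurableI _ GT); first apply: (@measurableI _ GT).
  - by apply: succ_sig => //; lia.
  - exact: succ_sig.
  - by apply: lvl_sig; rewrite /Lt.
pose n := absz (v - z)%R.
pose lst := [seq (z + i%:Z)%R | i <- iota 0 n].
pose Cc := cyl a lst (fun _ => 1%N).
have hCc : CylS a (Ge z) Cc.
  right; exists lst, (fun _ => 1%N); split => //.
  by apply/allP => x /mapP [i _ ->]; rewrite /Ge; lia.
have hind := indep1 hiid (Ip := Lt z) (Jp := Ge z) ltac:(by move=> i; rewrite /Lt /Ge; lia) hE hCc.
have hCpos : 0 < P Cc.
  rewrite (P_cyl hiid); apply: prod_gt0 => i.
  by case: hiid => _ h _; rewrite h.
have hmem k : (k < n)%N -> (z + k%:Z)%R \in lst.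
  by move=> hk; apply/mapP; exists k => //; rewrite mem_iota.
have hsub : E `&` Cc `<=`
  (S (v - (absz (v - b)%R).-1.+1%:Z)%R `&` [set w | a (v - (absz (v - b)%R).-1.+1%:Z)%R w = (absz (v - b)%R).-1.+1]) `&`
     (S (v - 0%N.+1%:Z)%R `&` [set w | a (v - 0%N.+1%:Z)%R w = 0%N.+1]).
  have eb : (v - (absz (v - b)%R).-1.+1%:Z)%R = b by lia.
  have ev : (v - 0%N.+1%:Z = z + n.-1%:Z)%R by rewrite /n; lia.
  rewrite eb ev => w [[[hSb hSz] hab] hC].
  have hone : forall i : nat, (i < n.-1)%N -> a (z + i%:Z)%R w = 1%N.
    by move=> i hi; apply: (hC (z + i%:Z)%R); rewrite /= hmem //; lia.
  have hit := ones_chain hone.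
  split; split => //.
  - by rewrite /=; move: hab => /= ->; lia.
  - move=> hfin; apply: hSz; apply: sub_finite_set hfin => x hx.
    by apply: desc_trans _ hx; exists n.-1.
  - by apply: (hC (z + n.-1%:Z)%R); rewrite /= hmem //; lia.
have h0 : P (E `&` Cc) = 0.
  apply/eqP; rewrite eq_le measure_ge0 andbT.
  rewrite -(two_children v (j := 0) (m := (absz (v - b)%R).-1)); last by lia.
  apply: le_measure; rewrite ?inE //.
  - by apply: measurableI; [exact: (sig_meas hiid hE)|exact: (cyl_meas hiid)].
  - by apply: measurableI; apply: measurableI; (exact: S_meas || exact: lvl_m).
move: hind; rewrite h0 => /esym /eqP; rewrite mule_eq0 => /orP[/eqP //|/eqP h].
by move: hCpos; rewrite h ltxx.
Qed.

Lemma tail_sum : \int[P]_w ((a 0 w)%:R : R)%:E = \sum_(k <oo) P [set w | (k < a 0 w)%N].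
Proof.
have mA k : measurable [set w | (k < a 0 w)%N] by exact: lt_meas.
transitivity (\int[P]_w (\sum_(k <oo) (\1_[set w | (k < a 0 w)%N] w : R)%:E)).
  apply: eq_integral => w _.
  rewrite (@nneseries_split _ _ 0%N (a 0 w)); last by move=> k _; rewrite lee_fin.
  rewrite eseries0 ?adde0; last first.
    move=> i hi _; rewrite indicE; move: hi; rewrite add0n => hi.
    by rewrite memNset //=; lia.
  rewrite add0n (eq_big_nat _ _ (F2 := fun _ => 1%E)); last first.
    by move=> i /andP[_ hi]; rewrite indicE mem_set.
  rewrite sumEFin big_const_nat subn0 /=.
  by congr (_%:E); elim: (a 0 w) => //= n IH; rewrite mulrS IH.
rewrite integral_nneseries //.
- apply: eq_eseriesr => k _; rewrite integral_indic ?setIT //.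
- by move=> k; apply/measurable_realfun.measurable_EFinP; exact: measurable_realfun.measurable_indic.
Qed.

Lemma preim_lt k y (m : nat) : theta k @^-1` [set w | (m < a y w)%N] = [set w | (m < a (y + k)%R w)%N].
Proof. by apply/seteqP; split => w /=; rewrite (a_shift hgrp hcomp). Qed.

Hypothesis hint : \int[P]_w ((a 0 w)%:R : R)%:E < +oo.

Lemma M_sum :
  \sum_(k <oo) P (S (- k%:Z)%R `&` [set w | (k < a (- k%:Z)%R w)%N]) = 1.
Proof.
pose M k := S (- k%:Z)%R `&` [set w | (k < a (- k%:Z)%R w)%N].
have mM k : measurable (M k) by apply: measurableI; [exact: S_meas|exact: lt_meas].
rewrite (sum_ae_disj mM); last first.
  move=> j k hjk.
  pose U i := S (- k%:Z)%R `&` S (- j%:Z)%R `&` [set w | a (- k%:Z)%R w = absz (i.+1%:Z - (- k%:Z))%R].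
  have mU i : measurable (U i).
    by apply: measurableI; [apply: measurableI|]; (exact: S_meas || exact: lvl_m).
  have hU : P (\bigcup_i U i) = 0.
    apply: null_bigcup => // i; apply: jump0 => //; lia.
  apply/eqP; rewrite eq_le measure_ge0 andbT; rewrite -hU.
  apply: le_measure; rewrite ?inE //; first exact: measurableI.
    exact: bigcupT_measurable.
  move=> w [[hSk hk] [hSj hj]]; exists (absz (- k%:Z + (a (- k%:Z)%R w)%:Z)%R).-1 => //.
  split; first by split.
  by rewrite /=; move: hk => /= hk; lia.
pose L k := [set w | (k < a (- k%:Z)%R w)%N].
have mL k : measurable (L k) by exact: lt_meas.
have hL : P (lim_sup_set L) = 0.
  apply: lim_sup_set_cvg0 => //.
  rewrite (eq_eseriesr (g := fun k => P [set w | (k < a 0 w)%N])); last first.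
    by move=> k _; rewrite -[RHS](P_shift (- k%:Z)) ?preim_lt ?add0r //; exact: lt_meas.
  by rewrite -tail_sum.
have mLK : measurable (lim_sup_set L).
  apply: bigcapT_measurable => n; apply: bigcup_measurable => k _; exact: mL.
have hsub : ~` lim_sup_set L `<=` \bigcup_k M k.
  move=> w hw.
  have [N hN] : exists N, forall k, (N <= k)%N -> (a (0 - k%:Z)%R w <= k)%N.
    apply: contrapT => hno; apply: hw => N _.
    have [k hk] : exists k, ~ ((N <= k)%N -> (a (0 - k%:Z)%R w <= k)%N).
      by apply: contrapT => h; apply: hno; exists N => k; apply: contrapT => h2; apply: h; exists k.
    exists k => /=; first by apply: contrapT => h; apply: hk => /h.
    by rewrite /L /=; apply: contrapT => h; apply: hk => _; rewrite sub0r leqNgt; apply/negP.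
  have [n0 [hn0 hs0]] := exists_succ (fun n => ha n w) hN.
  have [n [hn1 hn2 hn3]] := succ_cross (fun n => ha n w) hn0 hs0.
  exists (absz n) => //; have en : (- (absz n)%:Z)%R = n by lia.
  rewrite /M en; split => //=.
  by move: hn2; rewrite /Defs.fmap; lia.
apply/eqP; rewrite eq_le probability_le1 /=; last exact: bigcupT_measurable.
have : P (~` lim_sup_set L) <= P (\bigcup_k M k).
  apply: le_measure; rewrite ?inE //; first exact: measurableC.
  exact: bigcupT_measurable.
by rewrite probability_setC // hL sube0.
Qed.

Lemma q_formula : P (S 0) = ((fine (\int[P]_w ((a 0 w)%:R : R)%:E))^-1)%:E.
Proof.
have hMk k : P (S (- k%:Z)%R `&` [set w | (k < a (- k%:Z)%R w)%N]) =
    P (S 0) * P [set w | (k < a 0 w)%N].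
  rewrite -(indep2 hiid (Ip := Lt 0) (Jp := Ge 0) _ (succ_sig ha (lexx (0%R : int))) (@gt_sig _ T a 0%R k)); last first.
    by move=> i; rewrite /Lt /Ge; lia.
  rewrite -[RHS](P_shift (- k%:Z)); last by apply: measurableI; [exact: S_meas|exact: lt_meas].
  by rewrite preimage_setI preim_S preim_lt !add0r.
have := M_sum; rewrite (eq_eseriesr (g := fun k => P (S 0) * P [set w | (k < a 0 w)%N])); last first.
  by move=> k _; exact: hMk.
rewrite -(fineK (P_le1 (S_meas 0))) nneseriesZl; last first.
  by move=> k _; exact: measure_ge0.
rewrite -tail_sum.
have hE0 : 0 <= \int[P]_w ((a 0 w)%:R : R)%:E by apply: integral_ge0 => w _; rewrite lee_fin.
have hEfin : \int[P]_w ((a 0 w)%:R : R)%:E \is a fin_num by rewrite ge0_fin_numE.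
rewrite -(fineK hEfin) -EFinM => /(congr1 fine) /= h.
have hne : fine (\int[P]_w ((a 0 w)%:R : R)%:E) != 0%R.
  by apply/eqP => h0; move: h; rewrite h0 mulr0 => /eqP; rewrite eq_sym oner_eq0.
by congr (_%:E); rewrite -[LHS](mulfK hne) h mul1r.
Qed.

End Main.

Unset Implicit Arguments.
Set Strict Implicit.

Theorem mainTheorem8 (d : measure_display) (T : measurableType d)
  (R : realType) (P : probability T R)
  (theta : int -> T -> T) (a : int -> T -> nat) :
  measure_preserving_flow P theta ->
  flow_compatible theta a ->
  iid_nat P a ->
  (forall n w, (1 <= a n w)%N) ->
  (\int[P]_w ((a 0%R w)%:R : R)%:E < +oo)%E ->
  (0 < P [set w | a 0%R w = 1%N])%E ->
  P (successful a 0) = ((fine (\int[P]_w ((a 0%R w)%:R : R)%:E))^-1)%:E /\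
  P (ephemeral a 0) = (1 - (fine (\int[P]_w ((a 0%R w)%:R : R)%:E))^-1)%:E.
Proof.
move=> hflow hcomp hiid ha hint hp1.
have hq := q_formula hflow hcomp hiid ha hp1 hint.
split; first exact: hq.
have -> : ephemeral a 0 = ~` successful a 0.
  apply/seteqP; split => w /=; rewrite /ephemeral /successful /=; first by move=> h; apply.
  by move=> h; apply: contrapT.
rewrite probability_setC; last exact: (S_meas hiid ha).
by rewrite /successful hq EFinB.
Qed.
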